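(* Let $n\geqslant 2$ and let $\alpha,\beta\in\mathcal{AO}_n$ be two elements of rank $n-1$. Then $\alpha\mathscr{J}\beta$ in the monoid $\mathcal{AO}_n$ if and only if $\mathrm{d}(\alpha)$ and $\mathrm{d}(\beta)$ have the same parity.
   Context: Let $\Omega_n=\{1<2<\cdots<n\}$. $\mathcal{I}_n$ denotes the symmetric inverse monoid of all partial injective maps of $\Omega_n$, maps written on the right and composed left to right; the rank of $\alpha$ is $|\mathrm{Im}(\alpha)|$. $\mathcal{AI}_n$ is the set of all $\alpha\in\mathcal{I}_n$ with $\alpha=\sigma|_{\mathrm{Dom}(\alpha)}$ for some even permutation $\sigma$ of $\Omega_n$. $\mathcal{POI}_n$ is the set of order-preserving elements of $\mathcal{I}_n$ and $\mathcal{AO}_n=\mathcal{AI}_n\cap\mathcal{POI}_n$ (a monoid). For $\alpha$ of rank $n-1$, $\mathrm{d}(\alpha)$ is the unique element of $\Omega_n\setminus\mathrm{Dom}(\alpha)$. $\mathscr{J}$ is Green's relation: $a\mathscr{J}b$ iff $MaM=MbM$ in the monoid $M$. *)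

(* Defs.v *)
From mathcomp Require Import all_boot all_order all_fingroup.
Set Implicit Arguments. Unset Strict Implicit. Unset Printing Implicit Defensive.

(* Omega_n = {1 < ... < n} is modelled by 'I_n = {0 < ... < n-1}
   (element i : 'I_n stands for i+1). A partial map of Omega_n is
   a finite function 'I_n -> option 'I_n (None = undefined). *)
Definition pmapI (n : nat) := {ffun 'I_n -> option 'I_n}.

Definition pdom n (a : pmapI n) : {set 'I_n} := [set x | a x != None].
Definition pim n (a : pmapI n) : {set 'I_n} := [set y | [exists x, a x == Some y]].

Definition is_pinj n (a : pmapI n) : bool :=
  [forall x, forall y, (a x != None) ==> (a x == a y) ==> (x == y)].

Definition prank n (a : pmapI n) : nat := #|pim a|.

(* composition, maps written on the right: x (a b) = (x a) b *)
Definition pcomp n (a b : pmapI n) : pmapI n := [ffun x => obind b (a x)].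

Definition is_ord_pres n (a : pmapI n) : bool :=
  [forall x : 'I_n, forall y : 'I_n, forall u : 'I_n, forall v : 'I_n,
     (x < y)%N ==> (a x == Some u) ==> (a y == Some v) ==> (u < v)%N].

Definition in_AI n (a : pmapI n) : Prop :=
  is_pinj a /\
  exists s : {perm 'I_n}, ~~ odd_perm s /\
    forall x, x \in pdom a -> a x = Some (s x).

Definition in_AO n (a : pmapI n) : Prop := in_AI a /\ is_ord_pres a.

Definition ideal_AO n (a : pmapI n) : pmapI n -> Prop :=
  fun c => exists u v, in_AO u /\ in_AO v /\ c = pcomp (pcomp u a) v.

Definition J_AO n (a b : pmapI n) : Prop :=
  forall c, ideal_AO a c <-> ideal_AO b c.

(* Main.v *)
Require Import Defs.
From mathcomp Require Import all_boot all_order all_fingroup.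
From mathcomp Require Import zify.
Set Implicit Arguments. Unset Strict Implicit. Unset Printing Implicit Defensive.
Local Open Scope group_scope.
Notation pc := Defs.pcomp.

Definition Good n (d r : 'I_n) (s : {perm 'I_n}) :=
  s d = r /\ forall x y : 'I_n, x != d -> y != d -> (x < y)%N -> (s x < s y)%N.

Lemma Good_ne n (d r : 'I_n) s x : Good d r s -> x != d -> s x != r.
Proof. move=> [<- _] hx; apply/eqP=> /perm_inj h; by rewrite h eqxx in hx. Qed.

Lemma Good_comp n (d r q : 'I_n) s t : Good d r s -> Good r q t -> Good d q (s * t).
Proof.
move=> [hs1 hs2] [ht1 ht2]; split; first by rewrite permM hs1.
move=> x y hx hy hxy; rewrite !permM; apply: ht2; last exact: hs2.
- by apply: (@Good_ne _ d r s x).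
- by apply: (@Good_ne _ d r s y).
Qed.

Lemma Good_inv n (d r : 'I_n) s : Good d r s -> Good r d s^-1.
Proof.
move=> [hs1 hs2]; split; first by rewrite -hs1 permK.
move=> x y hx hy hxy.
have hx' : s^-1 x != d by apply: contraNneq hx => h; by rewrite -hs1 -h permKV.
have hy' : s^-1 y != d by apply: contraNneq hy => h; by rewrite -hs1 -h permKV.
case: (ltngtP (s^-1 x) (s^-1 y)) => // h.
- have := hs2 _ _ hy' hx' h; rewrite !permKV => h'; lia.
- move/val_inj: h => /(congr1 s); rewrite !permKV => h; subst; lia.
Qed.

Lemma Good_step n (d d' r : 'I_n) s : (d' : nat) = d.+1 -> Good d' r s ->
  Good d r (tperm d d' * s).
Proof.
move=> hd [hs1 hs2]; split; first by rewrite permM tpermL.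
have dd' : d != d'.
  by apply/eqP => e; have := congr1 val e => /= ; lia.
move=> x y hx hy hxy; rewrite !permM.
case: (eqVneq x d') => [ex|nx]; case: (eqVneq y d') => [ey|ny].
- subst; lia.
- subst x; rewrite tpermR tpermD //; [apply: hs2 => //; lia| by rewrite eq_sym |by rewrite eq_sym].
- subst y; rewrite tpermR tpermD //; [|by rewrite eq_sym|by rewrite eq_sym].
  apply: hs2 => //; move: hx; rewrite -val_eqE /= => hx; lia.
- rewrite !tpermD ?(eq_sym d) ?(eq_sym d') //; exact: hs2.
Qed.

Lemma Good_exists_le n k (d r : 'I_n) : (r : nat) = (d + k)%N ->
  exists s, Good d r s /\ odd_perm s = odd k.
Proof.
elim: k d => [|k IH] d hr.
- have -> : r = d by apply: val_inj => /=; rewrite hr addn0.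
  exists 1; split; last by rewrite odd_perm1.
  by split; [rewrite perm1 | move=> x y _ _; rewrite !perm1].
- have hd : (d.+1 < n)%N by have := ltn_ord r; lia.
  set d' := Ordinal hd.
  have [s [Gs Ps]] := IH d' (etrans hr (esym (addSnnS _ _))).
  exists (tperm d d' * s); split; first exact: Good_step.
  rewrite odd_permM odd_tperm Ps /=.
  have -> : (d != d') by apply/eqP => e; have := congr1 val e => /=; lia.
  by [].
Qed.

Definition Lset n (d x : 'I_n) := [set y : 'I_n | (y != d) && (y < x)%N].

Lemma Lmono n (d : 'I_n) s x : Good d d s -> x != d -> (#|Lset d x| <= #|Lset d (s x)|)%N.
Proof.
move=> [h1 h2] hx; rewrite -(card_imset (Lset d x) (@perm_inj _ s)).
apply: subset_leq_card; apply/subsetP => z /imsetP [y]; rewrite !inE => /andP [hy hyx] ->.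
apply/andP; split; last exact: h2.
by apply/eqP => e; move: hy; rewrite -(perm_inj (etrans e (esym h1))) eqxx.
Qed.

Lemma Lstrict n (d x y : 'I_n) : x != d -> (x < y)%N -> (#|Lset d x| < #|Lset d y|)%N.
Proof.
move=> hx hxy; apply: proper_card; apply/properP; split.
- apply/subsetP => z; rewrite !inE => /andP [-> h] /=; lia.
- by exists x; rewrite !inE ?hx ?ltnn // hxy.
Qed.

Lemma Good_id n (d : 'I_n) s : Good d d s -> s = 1.
Proof.
move=> G; apply/permP => x; rewrite perm1.
case: (eqVneq x d) => [->|hx]; first by case: G.
have hsx : s x != d by apply: (Good_ne G).
have le1 := Lmono G hx.
have le2 := Lmono (Good_inv G) hsx; rewrite permK in le2.
case: (ltngtP (s x) x) => h; last by apply: val_inj.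
- have := Lstrict hsx h; lia.
- have := Lstrict hx h; lia.
Qed.

Lemma Good_uniq n (d r : 'I_n) s t : Good d r s -> Good d r t -> s = t.
Proof.
move=> Gs Gt; have := Good_id (Good_comp Gs (Good_inv Gt)) => e.
apply/permP => x; have := congr1 (fun p : {perm 'I_n} => p x) e.
move=> /= h; rewrite permM perm1 in h; by rewrite -{2}h permKV.
Qed.

Lemma Good_odd n (d r : 'I_n) s : Good d r s -> odd_perm s = odd (d + r).
Proof.
move=> G; case: (leqP d r) => h.
- have [s0 [G0 P0]] := @Good_exists_le n (r - d) d r (esym (subnKC h)).
  rewrite (Good_uniq G G0) P0 oddB // oddD; by case: (odd d); case: (odd r).
- have [s0 [G0 P0]] := @Good_exists_le n (d - r) r d (esym (subnKC (ltnW h))).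
  rewrite -odd_permV (Good_uniq (Good_inv G) G0) P0 oddB ?(ltnW h) // oddD.
  by case: (odd d); case: (odd r).
Qed.

Lemma Good_exists n (d r : 'I_n) : exists s, Good d r s.
Proof.
case: (leqP d r) => h.
- have [s0 [G0 _]] := @Good_exists_le n (r - d) d r (esym (subnKC h)); by exists s0.
- have [s0 [G0 _]] := @Good_exists_le n (d - r) r d (esym (subnKC (ltnW h))).
  by exists s0^-1; apply: Good_inv.
Qed.

Lemma ordP n (a : pmapI n) (x y u v : 'I_n) : is_ord_pres a -> (x < y)%N -> a x = Some u -> a y = Some v -> (u < v)%N.
Proof.
move=> /forallP /(_ x) /forallP /(_ y) /forallP /(_ u) /forallP /(_ v).
by move=> h hxy hx hy; move: h; rewrite hxy hx hy !eqxx.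
Qed.

Lemma in_AO_intro n (a : pmapI n) s : ~~ odd_perm s ->
  (forall x, x \in pdom a -> a x = Some (s x)) -> is_ord_pres a -> in_AO a.
Proof.
move=> hs hext hop; split => //; split; last by exists s.
apply/forallP => x; apply/forallP => y; apply/implyP => hx; apply/implyP => /eqP hxy.
have dx : x \in pdom a by rewrite inE.
have dy : y \in pdom a by rewrite inE -hxy.
by move: hxy; rewrite !hext // => -[] /perm_inj ->.
Qed.

Lemma pdomP n (a : pmapI n) x : (x \in pdom a) = (a x != None).
Proof. by rewrite inE. Qed.

Lemma AO_good n (a : pmapI n) (da : 'I_n) : in_AO a -> prank a = n.-1 -> da \notin pdom a ->
  exists s, ~~ odd_perm s /\ Good da (s da) s /\ (forall x, x != da -> a x = Some (s x)).
Proof.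
move=> [[hinj [s [hs hext]]] hop] hrk hda.
have him : pim a = s @: pdom a.
  apply/setP => y; rewrite inE; apply/existsP/imsetP.
  - move=> [x /eqP hx]; have dx : x \in pdom a by rewrite pdomP hx.
    by exists x => //; move: hx; rewrite hext // => -[].
  - by move=> [x hx ->]; exists x; rewrite hext.
have hdom : pdom a = ~: [set da].
  apply/eqP; rewrite eqEcard; apply/andP; split.
  - by apply/subsetP => x hx; rewrite !inE; apply: contraNneq hda => <-.
  - by rewrite cardsC1 card_ord -hrk /prank him card_imset //; apply: perm_inj.
have hin x : x != da -> x \in pdom a by rewrite hdom !inE.
exists s; split => //; split; last by move=> x hx; rewrite hext // hin.
split => // x y hx hy hxy; apply: (ordP hop hxy); by rewrite hext // hin.
Qed.

Definition mk n (d : 'I_n) (s : {perm 'I_n}) : pmapI n :=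
  [ffun x => if x == d then None else Some (s x)].

Lemma mk_AO n (d r : 'I_n) s : Good d r s -> ~~ odd_perm s -> in_AO (mk d s).
Proof.
move=> G hs; apply: (in_AO_intro hs).
- by move=> x; rewrite pdomP /mk !ffunE; case: (x == d).
- apply/forallP => x; apply/forallP => y; apply/forallP => u; apply/forallP => v.
  apply/implyP => hxy; rewrite /mk !ffunE.
  case: (eqVneq x d) => // hx; case: (eqVneq y d) => hy; first by rewrite implybT.
   apply/implyP => /eqP [<-]; apply/implyP => /eqP [<-].
  by case: G => _ h; apply: h.
Qed.

Definition idm n : pmapI n := [ffun x => Some x].

Lemma idm_AO n : in_AO (idm n).
Proof.
apply: (in_AO_intro (s := 1)); first by rewrite odd_perm1.
- by move=> x _; rewrite ffunE perm1.
- apply/forallP => x; apply/forallP => y; apply/forallP => u; apply/forallP => v.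
  by rewrite !ffunE; apply/implyP => h; apply/implyP => /eqP [<-]; apply/implyP => /eqP [<-].
Qed.

Lemma pcompA n (a b c : pmapI n) : pc a (pc b c) = pc (pc a b) c.
Proof. apply/ffunP => x; rewrite !ffunE; case: (a x) => //= y; by rewrite ffunE. Qed.

Lemma pcomp_idm n (a : pmapI n) : pc (pc (idm n) a) (idm n) = a.
Proof. apply/ffunP => x; rewrite !ffunE /=; by case: (a x) => //= y; rewrite ffunE. Qed.

Lemma pcomp_AO n (u v : pmapI n) : in_AO u -> in_AO v -> in_AO (pc u v).
Proof.
move=> [[_ [su [hsu hu]]] opu] [[_ [sv [hsv hv]]] opv].
apply: (in_AO_intro (s := su * sv)); first by rewrite odd_permM (negbTE hsu) (negbTE hsv).
- move=> x; rewrite pdomP ffunE.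
  case e: (u x) => [y|] //= hy.
  have ex : u x = Some (su x) by rewrite hu // pdomP e.
  rewrite e in ex; case: ex => ey.
  by rewrite permM -ey hv // pdomP.
- apply/forallP => x; apply/forallP => y; apply/forallP => p; apply/forallP => q.
  apply/implyP => hxy; rewrite !ffunE.
  case ex: (u x) => [x'|] //=; case ey: (u y) => [y'|] /=; last by rewrite implybT.
  apply/implyP => /eqP hp; apply/implyP => /eqP hq.
  have := ordP opu hxy ex ey => h'.
  exact: (ordP opv h' hp hq).
Qed.

Lemma none_of n (a : pmapI n) x : x \notin pdom a -> a x = None.
Proof. by rewrite pdomP negbK => /eqP. Qed.

Lemma reach n (a b : pmapI n) (da db : 'I_n) : in_AO a -> in_AO b ->
  prank a = n.-1 -> prank b = n.-1 -> da \notin pdom a -> db \notin pdom b ->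
  odd da = odd db -> exists u v, in_AO u /\ in_AO v /\ b = pc (pc u a) v.
Proof.
move=> ha hb hra hrb hda hdb hp.
have [sa [esa [Ga exa]]] := AO_good ha hra hda.
have [sb [esb [Gb exb]]] := AO_good hb hrb hdb.
set ra := sa da in Ga exa; set rb := sb db in Gb exb.
have pa : odd ra = odd da.
  move: (Good_odd Ga); rewrite (negbTE esa) oddD; by case: (odd da); case: (odd ra).
have pb : odd rb = odd db.
  move: (Good_odd Gb); rewrite (negbTE esb) oddD; by case: (odd db); case: (odd rb).
have [s1 G1] := Good_exists db da.
have [s2 G2] := Good_exists ra rb.
have e1 : ~~ odd_perm s1 by rewrite (Good_odd G1) oddD hp; case: (odd db).
have e2 : ~~ odd_perm s2 by rewrite (Good_odd G2) oddD pa pb hp; case: (odd db).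
exists (mk db s1), (mk ra s2); split; first exact: mk_AO G1 e1.
split; first exact: mk_AO G2 e2.
have Gc := Good_comp (Good_comp G1 Ga) G2.
have E := Good_uniq Gb Gc.
apply/ffunP => x; rewrite !ffunE.
case: (eqVneq x db) => [->|hx]; first by rewrite none_of.
rewrite exb // /= exa; last exact: (Good_ne G1 hx).
rewrite /= ffunE (negbTE (Good_ne Ga (Good_ne G1 hx))).
by rewrite E !permM.
Qed.

Lemma forward n (a b : pmapI n) (da db : 'I_n) : in_AO b ->
  prank b = n.-1 -> da \notin pdom a -> db \notin pdom b ->
  (exists u v, in_AO u /\ in_AO v /\ b = pc (pc u a) v) -> odd da = odd db.
Proof.
move=> hb hrb hda hdb [u [v [[[_ [su [hsu hu]]] opu] [_ hbe]]]].
have [sb [_ [_ exb]]] := AO_good hb hrb hdb.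
have key x : x != db -> u x = Some (su x) /\ su x != da.
  move=> hx; have := exb x hx; rewrite hbe !ffunE.
  case e: (u x) => [y|] //= hv'.
  have ey : u x = Some (su x) by rewrite hu // pdomP e.
  rewrite e in ey; case: ey => ey; subst y; split => //.
  apply/eqP => ed; move: hv'; by rewrite ed none_of.
have G : Good db da su.
  split.
  - case: (eqVneq (su^-1 da) db) => [<-|h]; first by rewrite permKV.
    by have := (key _ h).2; rewrite permKV eqxx.
  - move=> x y hx hy hxy; apply: (ordP opu hxy); by [apply: (key _ hx).1 | apply: (key _ hy).1].
move: (Good_odd G); rewrite (negbTE hsu) oddD.
by case: (odd da); case: (odd db).
Qed.

Theorem proposition1p3 (n : nat) (hn : (2 <= n)%N) (a b : pmapI n) :
  in_AO a -> in_AO b -> prank a = n.-1 -> prank b = n.-1 ->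
  forall da db : 'I_n, da \notin pdom a -> db \notin pdom b ->
  (J_AO a b <-> odd da = odd db).
Proof.
move=> ha hb hra hrb da db hda hdb; split.
- move=> hJ; apply: (forward hb hrb hda hdb).
  apply/(hJ b).2; exists (idm n), (idm n); split; first exact: idm_AO.
  by split; [exact: idm_AO | rewrite pcomp_idm].
- move=> hp c; split.
  + have [u' [v' [hu' [hv' ea]]]] := reach hb ha hrb hra hdb hda (esym hp).
    move=> [u1 [v1 [hu1 [hv1 ->]]]]; rewrite ea.
    exists (pc u1 u'), (pc v' v1); split; first exact: pcomp_AO.
    split; first exact: pcomp_AO.
    by rewrite !pcompA.
  + have [u' [v' [hu' [hv' ea]]]] := reach ha hb hra hrb hda hdb hp.
    move=> [u1 [v1 [hu1 [hv1 ->]]]]; rewrite ea.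
    exists (pc u1 u'), (pc v' v1); split; first exact: pcomp_AO.
    split; first exact: pcomp_AO.
    by rewrite !pcompA.
Qed.
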